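(* Let $P$ be a finite $(3+1)$-free poset and let $a,b,c\in P$. Then: (i) if $a\approx b$ and $b\approx c$, then $a\approx c$; (ii) if $a\mathrel{\top} b$ and $b\approx c$, then $a\mathrel{\top} c$; (iii) if $a\mathrel{\bot} b$ and $b\approx c$, then $a\mathrel{\bot} c$; (iv) if $a\mathrel{\top} b$, then $U_a=U_b$; (v) if $a\mathrel{\bot} b$, then $D_a=D_b$; (vi) $v(a)$ and $v(b)$ are incomparable in the view order if and only if $a\mathrel{\top} b$ or $a\mathrel{\bot} b$; (vii) it is not the case that both $a\mathrel{\top} b$ and $b\mathrel{\bot} c$.
   Context: A poset $P$ is $(3+1)$-free if there are no $a,b,c,d\in P$ with $a<b<c$ and $d$ incomparable to each of $a,b,c$. For $a\in P$ let $D_a=\{x\in P: x<a\}$ and $U_a=\{x\in P: x>a\}$. Write $a\mathrel{\top} b$ if neither of the sets $D_a,D_b$ contains the other, and $a\mathrel{\bot} b$ if neither of the sets $U_a,U_b$ contains the other. Write $a\approx b$ (clones) if $D_a=D_b$ and $U_a=U_b$. The view of $a$ is $v(a)=(D_a,P\setminus U_a)$; views are ordered by $v(a)\le v(b)$ iff $D_a\subseteq D_b$ and $U_a\supseteq U_b$, and $v(a),v(b)$ are incomparable if neither $v(a)\le v(b)$ nor $v(b)\le v(a)$. *)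

(* Defs.v *)
From mathcomp Require Import all_boot all_order.
Set Implicit Arguments. Unset Strict Implicit. Unset Printing Implicit Defensive.
Import Order.TTheory.
Local Open Scope order_scope.

Section PosetDefs.
Context {disp : Order.disp_t} {P : finPOrderType disp}.

Definition three_one_free : Prop :=
  ~ exists a b c d : P, [/\ a < b, b < c, d >< a, d >< b & d >< c].

Definition Dn (a : P) : {set P} := [set x | x < a].
Definition Up (a : P) : {set P} := [set x | a < x].

Definition top_rel (a b : P) : Prop :=
  ~~ (Dn a \subset Dn b) /\ ~~ (Dn b \subset Dn a).
Definition bot_rel (a b : P) : Prop :=
  ~~ (Up a \subset Up b) /\ ~~ (Up b \subset Up a).
Definition clone (a b : P) : Prop := Dn a = Dn b /\ Up a = Up b.

Definition view (a : P) : {set P} * {set P} := (Dn a, ~: Up a).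
Definition view_le (a b : P) : Prop :=
  Dn a \subset Dn b /\ Up b \subset Up a.
Definition view_incomp (a b : P) : Prop := ~ view_le a b /\ ~ view_le b a.

End PosetDefs.

(* Main.v *)
Require Import Defs.
From mathcomp Require Import all_boot all_order.
Set Implicit Arguments. Unset Strict Implicit.
Import Order.TTheory.
Local Open Scope order_scope.

Section S. Context {d : Order.disp_t} {P : finPOrderType d}.
Lemma ic (x y : P) : ~~ (x < y) -> ~~ (y < x) -> x != y -> x >< y.
Proof. move=> h1 h2 h3; apply/negP; rewrite /Order.comparable !le_eqVlt.
by rewrite (negbTE h1) (negbTE h2) (negbTE h3) eq_sym (negbTE h3). Qed.

Hypothesis H31 : @three_one_free d P.

Lemma fr (a b c q : P) : a < b -> b < c -> q >< a -> q >< b -> q >< c -> False.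
Proof. by move=> *; apply: H31; exists a, b, c, q. Qed.

Lemma top_up (a b : P) : top_rel a b -> Up a \subset Up b.
Proof.
move=> [/subsetPn [x xa xb] /subsetPn [y yb ya]]; move: xa xb yb ya; rewrite !inE.
move=> xa xb yb ya; apply/subsetP => z; rewrite !inE => az; apply/negPn/negP => bz.
apply: (fr (q:=b) xa az); apply: ic.
- by apply/negP => bx; move: ya; rewrite (lt_trans yb (lt_trans bx xa)).
- by [].
- by apply/eqP => e; subst; move: ya; rewrite (lt_trans yb xa).
- by apply/negP => ba; move: ya; rewrite (lt_trans yb ba).
- by apply/negP => ab; move: xb; rewrite (lt_trans xa ab).
- by apply/eqP => e; subst; move: ya; rewrite yb.
- by [].
- by apply/negP => zb; move: xb; rewrite (lt_trans xa (lt_trans az zb)).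
- by apply/eqP => e; subst; move: xb; rewrite (lt_trans xa az).
Qed.

Lemma bot_dn (a b : P) : bot_rel a b -> Dn a \subset Dn b.
Proof.
move=> [/subsetPn [x xa xb] /subsetPn [y yb ya]]; move: xa xb yb ya; rewrite !inE.
move=> xa xb yb ya; apply/subsetP => z; rewrite !inE => za; apply/negPn/negP => zb.
apply: (fr (q:=b) za xa); apply: ic.
- by apply/negP => bz; move: xb; rewrite (lt_trans bz (lt_trans za xa)).
- by [].
- by apply/eqP => e; subst; move: xb; rewrite (lt_trans za xa).
- by apply/negP => ba; move: xb; rewrite (lt_trans ba xa).
- by apply/negP => ab; move: ya; rewrite (lt_trans ab yb).
- by apply/eqP => e; subst; move: ya; rewrite yb.
- by apply/negP => bx; move: xb; rewrite bx.
- by apply/negP => xb'; move: ya; rewrite (lt_trans xa (lt_trans xb' yb)).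
- by apply/eqP => e; subst; move: ya; rewrite (lt_trans xa yb).
Qed.

Lemma top_sym (a b : P) : top_rel a b -> top_rel b a.
Proof. by case. Qed.
Lemma bot_sym (a b : P) : bot_rel a b -> bot_rel b a.
Proof. by case. Qed.

Lemma top_upE (a b : P) : top_rel a b -> Up a = Up b.
Proof. by move=> h; apply/eqP; rewrite eqEsubset !top_up //; apply: top_sym. Qed.
Lemma bot_dnE (a b : P) : bot_rel a b -> Dn a = Dn b.
Proof. by move=> h; apply/eqP; rewrite eqEsubset !bot_dn //; apply: bot_sym. Qed.

Lemma nostrict (a b : P) : Dn a \subset Dn b -> ~~ (Dn b \subset Dn a) ->
  Up a \subset Up b -> ~~ (Up b \subset Up a) -> False.
Proof.
move=> /subsetP dab /subsetPn [x xb xa] /subsetP uab /subsetPn [y yb ya].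
move: xb xa yb ya; rewrite !inE => xb xa yb ya.
have nab : ~~ (a < b) by apply/negP => ab; move: ya; rewrite (lt_trans ab yb).
apply: (fr (q:=a) xb yb); apply: ic.
- by apply/negP => ax; move: nab; rewrite (lt_trans ax xb).
- by [].
- by apply/eqP => e; subst; move: nab; rewrite xb.
- by [].
- by apply/negP => ba; move: xa; rewrite (lt_trans xb ba).
- by apply/eqP => e; subst; move: xa; rewrite xb.
- by [].
- by apply/negP => ya'; move: xa; rewrite (lt_trans xb (lt_trans yb ya')).
- by apply/eqP => e; subst; move: xa; rewrite (lt_trans xb yb).
Qed.

End S.

Theorem lemma2p6 (disp : Order.disp_t) (P : finPOrderType disp)
  (H31 : @three_one_free disp P) (a b c : P) :
  (clone a b -> clone b c -> clone a c) /\
  (top_rel a b -> clone b c -> top_rel a c) /\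
  (bot_rel a b -> clone b c -> bot_rel a c) /\
  (top_rel a b -> Up a = Up b) /\
  (bot_rel a b -> Dn a = Dn b) /\
  (view_incomp a b <-> top_rel a b \/ bot_rel a b) /\
  ~ (top_rel a b /\ bot_rel b c).
Proof.
split; first by rewrite /clone; move=> [-> ->] [-> ->].
split; first by move=> [h1 h2] [e _]; rewrite /top_rel -e.
split; first by move=> [h1 h2] [_ e]; rewrite /bot_rel -e.
split; first exact: top_upE.
split; first exact: bot_dnE.
split.
  rewrite /view_incomp /view_le /top_rel /bot_rel; split.
    move=> [h1 h2].
    case: (boolP (Dn a \subset Dn b)) => d1; case: (boolP (Dn b \subset Dn a)) => d2;
    case: (boolP (Up a \subset Up b)) => u1; case: (boolP (Up b \subset Up a)) => u2;
    try (by left); try (by right); exfalso;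
    try (by apply: h1); try (by apply: h2);
    try (by apply: (nostrict H31 d1 d2 u1 u2)); by apply: (nostrict H31 d2 d1 u2 u1).
  case => -[/negP n1 /negP n2]; split => -[h1 h2]; by [apply: n1 | apply: n2].
move=> [tab bcb].
have Ue := top_upE H31 tab.
have De := bot_dnE H31 bcb.
case: tab => /subsetPn [u ua ub] /subsetPn [w wb wa].
case: bcb => /subsetPn [x xb xc] /subsetPn [y yc yb].
move: ua ub wb wa xb xc yc yb; rewrite !inE => ua ub wb wa xb xc yc yb.
have xa : a < x.
  have : x \in Up b by rewrite inE.
  by rewrite -Ue inE.
have wc : w < c.
  have : w \in Dn b by rewrite inE.
  by rewrite De inE.
have uc : ~~ (u < c).
  apply/negP => uc; have : u \in Dn c by rewrite inE.
  by rewrite -De inE (negbTE ub).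
apply: (fr (q:=c) H31 ua xa); apply: ic.
- apply/negP => cu; move: wa; rewrite (lt_trans wc (lt_trans cu ua)) //.
- by [].
- by apply/eqP => e; subst; move: wa; rewrite (lt_trans wc ua).
- apply/negP => ca; move: wa; rewrite (lt_trans wc ca) //.
- apply/negP => ac.
  have : c \in Up b by rewrite -Ue inE.
  rewrite inE => bc.
  have : b \in Dn c by rewrite inE.
  by rewrite -De inE ltxx.
- by apply/eqP => e; move: uc; rewrite e ua.

- apply/negP => cx; move: xc; rewrite cx //.
- apply/negP => xc'.
  have : b \in Dn c by rewrite inE (lt_trans xb xc').
  by rewrite -De inE ltxx.
- apply/eqP => e; move: xb; rewrite -e => bc; have : b \in Dn c by rewrite inE.
  by rewrite -De inE ltxx.
Qed.
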